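(* For every $t>0$, $\mathbf R\in S'_{\mathbf R}$ and $\mathbf K\in S'_{\mathbf K}$, the partial Hessians $\nabla^2_{\mathbf x\mathbf x}f_t$ and $\nabla^2_{\mathbf y\mathbf y}f_t$ of $f_t$ are non-singular, where $\mathbf x=\mathrm{veh}(\mathbf R)$ and $\mathbf y=\mathrm{vec}(\mathbf N)$.
   Context: All matrices are real. Fix integers $m,n_1,n_2\ge 1$, $J\ge 0$. Let $\mathbf H_1\in\mathbb R^{n_1\times m}$, $\mathbf H_2\in\mathbb R^{n_2\times m}$, $\mathbf H_{3j}\in\mathbb R^{n_{3j}\times m}$ ($j=1,\dots,J$); $\mathbf W_2=\mathbf H_2^T\mathbf H_2$, $\mathbf W_{3j}=\mathbf H_{3j}^T\mathbf H_{3j}$, $\mathbf H=\begin{bmatrix}\mathbf H_1\\ \mathbf H_2\end{bmatrix}$; $P_T,P_{Ij}>0$. $S'_{\mathbf R}=\{\mathbf R\text{ symmetric}:\mathbf R>0,\ \mathrm{tr}(\mathbf R)<P_T,\ \mathrm{tr}(\mathbf W_{3j}\mathbf R)<P_{Ij}\ \forall j\}$; $S'_{\mathbf K}=\{\mathbf K=\begin{bmatrix}\mathbf I&\mathbf N\\ \mathbf N^T&\mathbf I\end{bmatrix}:\mathbf N\in\mathbb R^{n_1\times n_2},\ \mathbf K>0\}$. $f(\mathbf R,\mathbf K)=\ln|\mathbf I+\mathbf K^{-1}\mathbf H\mathbf R\mathbf H^T|-\ln|\mathbf I+\mathbf W_2\mathbf R|$; for $t>0$, $f_t(\mathbf R,\mathbf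 K)=f(\mathbf R,\mathbf K)+t^{-1}\ln|\mathbf R|+t^{-1}\ln(P_T-\mathrm{tr}\mathbf R)+\sum_j t^{-1}\ln(P_{Ij}-\mathrm{tr}(\mathbf W_{3j}\mathbf R))-t^{-1}\ln|\mathbf K|$. $\mathrm{veh}(\mathbf R)$ is the vector of lower-triangular (including diagonal) entries of $\mathbf R$, $\mathrm{vec}(\mathbf N)$ stacks the columns of $\mathbf N$; $f_t$ is viewed as a function of the independent real variables $\mathbf x,\mathbf y$. *)

(* Defs.v *)
From HB Require Import structures.
From mathcomp Require Import all_boot all_order all_algebra.
From mathcomp Require Import all_classical all_reals all_analysis.
Set Implicit Arguments. Unset Strict Implicit. Unset Printing Implicit Defensive.
Import Order.TTheory GRing.Theory Num.Theory.
Import numFieldNormedType.Exports.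
Local Open Scope ring_scope.

Section Defs.
Variable R : realType.

Definition posdef n (A : 'M[R]_n) : Prop :=
  forall v : 'cV[R]_n, v != 0 -> 0 < (v^T *m A *m v) 0 0.

Definition symmx n (A : 'M[R]_n) : Prop := A^T = A.

(* Index list of veh: lower-triangular pairs (i,j), i >= j, column by column. *)
Definition lowpairs m : seq ('I_m * 'I_m) :=
  [seq (i, j) | j : 'I_m <- enum 'I_m, i : 'I_m <- [seq i : 'I_m <- enum 'I_m | (nat_of_ord j <= nat_of_ord i)%N]].

Definition nx m := size (lowpairs m).

(* veh(R): vector of the lower-triangular entries (including diagonal) *)
Definition veh m (A : 'M[R]_m) : 'rV[R]_(nx m) :=
  \row_(k < nx m) \sum_(i < m) \sum_(j < m)
     (if nth (i, j) (lowpairs m) k == (i, j) then A i j else 0).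

(* the symmetric matrix whose veh is x *)
Definition Rmat m (x : 'rV[R]_(nx m)) : 'M[R]_m :=
  \matrix_(i, j) \sum_(k < nx m)
     (if (nth (i, j) (lowpairs m) k == (i, j)) || (nth (i, j) (lowpairs m) k == (j, i))
      then x 0 k else 0).

(* vec(N): stacks the columns of N *)
Definition vecN n1 n2 (N : 'M[R]_(n1, n2)) : 'rV[R]_(n2 * n1) := mxvec N^T.
Definition Nmat n1 n2 (y : 'rV[R]_(n2 * n1)) : 'M[R]_(n1, n2) := (vec_mx y)^T.

Definition Kmat n1 n2 (N : 'M[R]_(n1, n2)) : 'M[R]_(n1 + n2) :=
  block_mx 1%:M N N^T 1%:M.

Definition Hmat m n1 n2 (H1 : 'M[R]_(n1, m)) (H2 : 'M[R]_(n2, m)) : 'M[R]_(n1 + n2, m) :=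
  col_mx H1 H2.

Definition f m n1 n2 (H1 : 'M[R]_(n1, m)) (H2 : 'M[R]_(n2, m))
    (Rm : 'M[R]_m) (K : 'M[R]_(n1 + n2)) : R :=
  let H := Hmat H1 H2 in
  ln (\det (1%:M + invmx K *m H *m Rm *m H^T))
  - ln (\det (1%:M + (H2^T *m H2) *m Rm)).

Definition ft m n1 n2 (J : nat) (n3 : 'I_J -> nat)
    (H1 : 'M[R]_(n1, m)) (H2 : 'M[R]_(n2, m)) (H3 : forall j : 'I_J, 'M[R]_(n3 j, m))
    (PT : R) (PI : 'I_J -> R) (t : R)
    (Rm : 'M[R]_m) (K : 'M[R]_(n1 + n2)) : R :=
  f H1 H2 Rm K + t^-1 * ln (\det Rm) + t^-1 * ln (PT - \tr Rm)
  + \sum_(j < J) t^-1 * ln (PI j - \tr ((H3 j)^T *m H3 j *m Rm))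
  - t^-1 * ln (\det K).

Definition ft_xy m n1 n2 (J : nat) (n3 : 'I_J -> nat)
    (H1 : 'M[R]_(n1, m)) (H2 : 'M[R]_(n2, m)) (H3 : forall j : 'I_J, 'M[R]_(n3 j, m))
    (PT : R) (PI : 'I_J -> R) (t : R)
    (x : 'rV[R]_(nx m)) (y : 'rV[R]_(n2 * n1)) : R :=
  ft H1 H2 H3 PT PI t (Rmat x) (Kmat (Nmat y)).

Definition hessian d (F : 'rV[R]_d -> R) (z : 'rV[R]_d) : 'M[R]_d :=
  \matrix_(a, b) 'D_(delta_mx 0 a) ('D_(delta_mx 0 b) F) z.

End Defs.

(* Main.v *)
Require Import Defs.
From HB Require Import structures.
From mathcomp Require Import all_boot all_order all_algebra.
From mathcomp Require Import all_classical all_reals all_analysis.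
From mathcomp Require Import fingroup perm.
From mathcomp Require Import ring lra.
Set Implicit Arguments. Unset Strict Implicit. Unset Printing Implicit Defensive.
Import Order.TTheory GRing.Theory Num.Theory.
Import numFieldNormedType.Exports.
Local Open Scope ring_scope.

Section LA.
Variable R : rcfType.

Definition qf n (v : 'cV[R]_n) (A : 'M[R]_n) : R := (v^T *m A *m v) 0 0.
Definition pd n (A : 'M[R]_n) := forall v : 'cV[R]_n, v != 0 -> 0 < qf v A.
Definition psd n (A : 'M[R]_n) := forall v : 'cV[R]_n, 0 <= qf v A.
Definition sym n (A : 'M[R]_n) := A^T = A.

Lemma qf0 n (A : 'M[R]_n) : qf 0 A = 0.
Proof. by rewrite /qf mulmx0 mxE. Qed.

Lemma pd_psd n (A : 'M[R]_n) : pd A -> psd A.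
Proof.
move=> hA v; have [->|v0] := eqVneq v 0; first by rewrite qf0.
exact/ltW/hA.
Qed.

Lemma trmx_neq0 m n (v : 'M[R]_(m, n)) : v != 0 -> v^T != 0.
Proof. by apply: contra => /eqP h; rewrite -[v]trmxK h trmx0. Qed.

Lemma pd_unit n (A : 'M[R]_n) : pd A -> A \in unitmx.
Proof.
move=> hA; rewrite unitmxE unitfE; apply/negP => /det0P [v v0 vA].
have := hA v^T (trmx_neq0 v0); rewrite /qf trmxK vA mul0mx mxE ltxx //.
Qed.


Lemma mx11E (u : 'M[R]_1) : u = (u 0 0)%:M.
Proof. exact: mx11_scalar. Qed.

Lemma mxDE m n (A B : 'M[R]_(m, n)) i j : (A + B) i j = A i j + B i j.
Proof. by rewrite mxE. Qed.
Lemma mxBE m n (A B : 'M[R]_(m, n)) i j : (A - B) i j = A i j - B i j.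
Proof. by rewrite !mxE. Qed.
Lemma mxNE m n (A : 'M[R]_(m, n)) i j : (- A) i j = - A i j.
Proof. by rewrite mxE. Qed.
Lemma mxZE m n a (A : 'M[R]_(m, n)) i j : (a *: A) i j = a * A i j.
Proof. by rewrite mxE. Qed.
Lemma mxSE n a (i : 'I_n) : (a%:M : 'M[R]_n) i i = a.
Proof. by rewrite mxE eqxx mulr1n. Qed.
Lemma mx11tr (u : 'M[R]_1) : (u^T *m u) 0 0 = u 0 0 * u 0 0.
Proof. by rewrite mxE big_ord1 mxE. Qed.
Lemma mx11T (u : 'M[R]_1) : u^T 0 0 = u 0 0.
Proof. by rewrite mxE. Qed.

Lemma chol_step n
  (IH : forall S : 'M[R]_n, sym S -> pd S -> exists C : 'M[R]_n, S = C *m C^T)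
  (A : 'M[R]_(1 + n)) : sym A -> pd A -> exists C : 'M[R]_(1 + n), A = C *m C^T.
Proof.
rewrite -[A]submxK /sym /pd.
set a := ulsubmx A; set r := ursubmx A; set c := dlsubmx A; set D := drsubmx A.
rewrite tr_block_mx => /eq_block_mx [ha hc hr hD] pA.
have ca : c = r^T by rewrite -hc trmxK.
rewrite ca in pA *.
pose al := a 0 0.
have aE : a = al%:M by exact: mx11E.
have al0 : 0 < al.
  have := pA (col_mx 1%:M 0).
  rewrite /qf tr_col_mx mul_row_block mul_row_col trmx0 trmx1 !mul1mx !mul0mx !mulmx0 !addr0 mulmx1; apply.
  apply/eqP => /eqP; rewrite col_mx_eq0 => /andP[/eqP /matrixP /(_ 0 0)].
  by rewrite !mxE /= => /eqP; rewrite oner_eq0.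
pose S := D - al^-1 *: (r^T *m r).
have sS : sym S by rewrite /sym /S linearB /= linearZ /= trmx_mul trmxK hD.
have pS : pd S.
  move=> x x0.
  pose g := - al^-1 * (r *m x) 0 0.
  have := pA (col_mx g%:M x).
  have -> : col_mx g%:M x != 0.
    by apply: contra x0; rewrite col_mx_eq0 => /andP[_].
  move=> /(_ isT).
  rewrite /qf tr_col_mx mul_row_block mul_row_col tr_scalar_mx aE.
  have e2 : x^T *m (r^T *m r) *m x = (r *m x)^T *m (r *m x).
    by rewrite trmx_mul !mulmxA.
  rewrite /S mulmxDl !mul_scalar_mx !mul_mx_scalar mulmxDl -scalemxAl.
  rewrite -trmx_mul mulmxBr mulmxBl -scalemxAr -scalemxAl e2.
  rewrite !(mxDE, mxBE, mxNE, mxZE, mxSE, mx11T, mx11tr).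
  rewrite /g; set rho := (r *m x) 0 0; set q := (x^T *m D *m x) 0 0.
  set L := (X in 0 < X -> _).
  have -> // : L = q + - (al^-1 * (rho * rho)).
  by rewrite /L; field; rewrite gt_eqF.
have [C' eC'] := IH S sS pS.
pose s := Num.sqrt al.
have s0 : 0 < s by rewrite sqrtr_gt0.
exists (block_mx s%:M 0 (s^-1 *: r^T) C').
rewrite tr_block_mx mulmx_block !trmx0 !mulmx0 !addr0 mul0mx addr0.
rewrite tr_scalar_mx linearZ /= trmxK -eC' /S.
have ss : s * s = al by rewrite -expr2 sqr_sqrtr // ltW.
have sV : s * s^-1 = 1 by rewrite mulfV // gt_eqF.
rewrite mul_scalar_mx scale_scalar_mx ss -aE mul_scalar_mx.
rewrite [s *: (_ *: r)]scalerA sV scale1r.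
rewrite mul_mx_scalar [s *: (_ *: r^T)]scalerA sV scale1r.
rewrite -scalemxAl -scalemxAr scalerA -invfM ss addrC subrK //.
Qed.

Lemma chol n (A : 'M[R]_n) : sym A -> pd A -> exists C : 'M[R]_n, A = C *m C^T.
Proof.
elim: n A => [|n IH] A sA pA.
  by exists 0; apply/matrixP => -[].
exact: (chol_step IH).
Qed.


Lemma diag_qf n (C W : 'M[R]_n) i : (C^T *m W *m C) i i = qf (col i C) W.
Proof.
rewrite /qf !mxE; apply: eq_bigr => l _; rewrite !mxE; congr (_ * _).
by apply: eq_bigr => k _; rewrite !mxE.
Qed.

Lemma qf_conj n (V P : 'M[R]_n) u : sym V -> qf u (V *m P *m V) = qf (V *m u) P.
Proof. by move=> sV; rewrite /qf trmx_mul sV !mulmxA. Qed.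

Lemma tr_CW n (C W : 'M[R]_n) : \tr (C *m C^T *m W) = \sum_i qf (col i C) W.
Proof.
rewrite -mulmxA mxtrace_mulC /mxtrace; apply: eq_bigr => i _.
by rewrite diag_qf.
Qed.

Lemma tr_psd n (P W : 'M[R]_n) : sym P -> pd P -> psd W -> 0 <= \tr (P *m W).
Proof.
move=> sP pP pW; have [C ->] := chol sP pP.
by rewrite tr_CW; apply: sumr_ge0 => i _; exact: pW.
Qed.

Lemma det_pd n (A : 'M[R]_n) : sym A -> pd A -> 0 < \det A.
Proof.
move=> sA pA; have uA := pd_unit pA.
have [C eC] := chol sA pA.
move: uA; rewrite eC det_mulmx det_tr unitmxE det_mulmx det_tr unitfE mulf_eq0 orbb => h.
by rewrite lt0r mulf_eq0 orbb h /= -expr2 sqr_ge0.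
Qed.

Lemma tr_pd_strict n (P V : 'M[R]_n) : sym P -> pd P -> sym V -> V != 0 ->
  0 < \tr (P *m V *m P *m V).
Proof.
move=> sP pP sV V0; have uP := pd_unit pP.
have [C eC] := chol sP pP.
have -> : P *m V *m P *m V = C *m C^T *m (V *m P *m V).
  by rewrite {1}eC !mulmxA.
rewrite tr_CW.
have [i Hi] : exists i, V *m col i C != 0.
  apply/existsP; apply: contraT; rewrite negb_exists => /forallP h.
  have VC : V *m C = 0.
    apply/matrixP => a b; have := h b.
    rewrite negbK colE mulmxA -colE => /eqP /matrixP /(_ a 0).
    by rewrite !mxE.
  have uC : C \in unitmx.
    by move: uP; rewrite eC !unitmxE det_mulmx unitrM => /andP[].
  by move: V0; rewrite -[V](mulmxK uC) VC mul0mx eqxx.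
rewrite (bigD1 i) //=; apply: ltr_wpDr.
  by apply: sumr_ge0 => j _; rewrite qf_conj //; exact: pd_psd.
by rewrite qf_conj //; exact: pP.
Qed.


Lemma qf1_gt0 n (v : 'cV[R]_n) : v != 0 -> 0 < qf v 1%:M.
Proof.
move=> v0; rewrite /qf mulmx1 mxE.
have [i Hi] : exists i, v i 0 != 0.
  apply/existsP; apply: contraT; rewrite negb_exists => /forallP h.
  have v00 : v = 0.
    apply/matrixP => a b; rewrite (ord1 b) [RHS]mxE.
    by have := h a; rewrite negbK => /eqP.
  by rewrite v00 eqxx in v0.
rewrite (bigD1 i) //=; apply: ltr_wpDr.
  by apply: sumr_ge0 => j _; rewrite mxE -expr2 sqr_ge0.
by rewrite mxE -expr2 exprn_even_gt0.
Qed.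

Lemma pd1 n : @pd n 1%:M.
Proof. by move=> v; exact: qf1_gt0. Qed.

Lemma sym1 n : @sym n 1%:M.
Proof. exact: trmx1. Qed.

Lemma qfD n (A B : 'M[R]_n) v : qf v (A + B) = qf v A + qf v B.
Proof. by rewrite /qf mulmxDr mulmxDl mxE. Qed.

Lemma qfN n (A : 'M[R]_n) v : qf v (- A) = - qf v A.
Proof. by rewrite /qf mulmxN mulNmx mxE. Qed.

Lemma qfB n (A B : 'M[R]_n) v : qf v (A - B) = qf v A - qf v B.
Proof. by rewrite qfD qfN. Qed.

Lemma qfZ n (A : 'M[R]_n) a v : qf v (a *: A) = a * qf v A.
Proof. by rewrite /qf -scalemxAr -scalemxAl mxE. Qed.

Lemma tr_psd_gen n (A W : 'M[R]_n) : sym A -> psd A -> psd W -> 0 <= \tr (A *m W).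
Proof.
move=> sA pA pW.
have trW : 0 <= \tr W by rewrite -[W]mul1mx; apply: tr_psd => //; [exact: sym1 | exact: pd1].
have key : forall e : R, 0 < e -> 0 <= \tr (A *m W) + e * \tr W.
  move=> e e0.
  have -> : \tr (A *m W) + e * \tr W = \tr ((A + e%:M) *m W).
    by rewrite mulmxDl mxtraceD mul_scalar_mx mxtraceZ.
  apply: tr_psd => //.
    by rewrite /sym linearD /= sA tr_scalar_mx.
  move=> v v0; rewrite qfD -scalemx1 qfZ.
  by apply: ltr_wpDl; [exact: pA | rewrite mulr_gt0 // qf1_gt0].
rewrite leNgt; apply/negP => hlt.
set a := \tr (A *m W) in key hlt; set b := \tr W in key trW.
have e0 : 0 < - a / (2 * (b + 1)) by rewrite divr_gt0 // ?oppr_gt0 // mulr_gt0 // ltr_wpDl.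
have := key _ e0; rewrite leNgt => /negP; apply.
have hb : 0 < b + 1 by rewrite ltr_wpDl.
have -> : a + - a / (2 * (b + 1)) * b = a * ((b + 2) / (2 * (b + 1))).
  by field; rewrite gt_eqF.
have hc : 0 < (b + 2) / (2 * (b + 1)) by rewrite divr_gt0 // ?mulr_gt0 // ltr_wpDl.
nra.
Qed.

Lemma psd_conj n (V X : 'M[R]_n) : sym V -> psd X -> psd (V *m X *m V).
Proof. by move=> sV pX u; rewrite qf_conj //; exact: pX. Qed.

Lemma psd_add n (X Y : 'M[R]_n) : psd X -> psd Y -> psd (X + Y).
Proof. by move=> pX pY u; rewrite qfD addr_ge0. Qed.

Lemma tr_mono n (X Y V : 'M[R]_n) : sym X -> sym Y -> sym V ->
  psd (X - Y) -> psd X -> psd Y ->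
  \tr (Y *m V *m Y *m V) <= \tr (X *m V *m X *m V).
Proof.
move=> sX sY sV pXY pX pY.
rewrite -subr_ge0.
have -> : \tr (X *m V *m X *m V) - \tr (Y *m V *m Y *m V) =
          \tr ((X - Y) *m (V *m (X + Y) *m V)).
  rewrite mulmxBl !(mulmxDr, mulmxDl) [\tr (_ - _)]linearB /= !mxtraceD.
  have -> : \tr (Y *m (V *m X *m V)) = \tr (X *m (V *m Y *m V)).
    by rewrite !mulmxA -[Y *m V *m X *m V]mulmxA mxtrace_mulC !mulmxA.
  rewrite !mulmxA; lra.
apply: tr_psd_gen.
- by rewrite /sym linearB /= sX sY.
- exact: pXY.
- exact: psd_conj (psd_add pX pY).
Qed.


Lemma qf_mul m n (H : 'M[R]_(n, m)) (P : 'M[R]_n) u :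
  qf u (H^T *m P *m H) = qf (H *m u) P.
Proof. by rewrite /qf trmx_mul !mulmxA. Qed.

Lemma sym_inv n (M : 'M[R]_n) : sym M -> sym (invmx M).
Proof. by move=> sM; rewrite /sym trmx_inv sM. Qed.

Lemma pd_inv n (M : 'M[R]_n) : sym M -> pd M -> pd (invmx M).
Proof.
move=> sM pM v v0; have uM := pd_unit pM.
have -> : qf v (invmx M) = qf (invmx M *m v) M.
  rewrite /qf trmx_mul (sym_inv sM) !mulmxA mulmxKV //.
have := pM (invmx M *m v); apply; apply: contra v0 => /eqP h.
by rewrite -[v](mulKVmx uM) h mulmx0.
Qed.

Lemma variational n (M : 'M[R]_n) (u z : 'cV[R]_n) : sym M -> pd M ->
  2 * (z^T *m u) 0 0 - qf z M <= qf u (invmx M).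
Proof.
move=> sM pM; have uM := pd_unit pM.
have := pd_psd pM (invmx M *m u - z).
have -> : qf (invmx M *m u - z) M = qf u (invmx M) - 2 * (z^T *m u) 0 0 + qf z M.
  rewrite /qf [(_ - z)^T]linearB /= trmx_mul (sym_inv sM) !mulmxBl !mulmxBr.
  rewrite -[u^T *m invmx M *m M]mulmxA mulVmx // mulmx1.
  rewrite [z^T *m M *m (invmx M *m u)]mulmxA -[z^T *m M *m invmx M]mulmxA mulmxV // mulmx1.
  rewrite !mxBE.
  have -> : (u^T *m z) 0 0 = (z^T *m u) 0 0 by rewrite -[u^T *m z]trmxK trmx_mul trmxK mxE.
  rewrite mulmxA; lra.
lra.
Qed.

End LA.

Section ALG.
Variable R : fieldType.

Definition pdet n (Y B : 'M[R]_n) : {poly R} :=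
  \det (map_mx polyC Y + 'X *: map_mx polyC B).

Lemma pdetE n (Y B : 'M[R]_n) h : (pdet Y B).[h] = \det (Y + h *: B).
Proof.
rewrite /pdet -horner_evalE -det_map_mx; congr (\det _).
by apply/matrixP => i j; rewrite !mxE /= horner_evalE !hornerE.
Qed.

Lemma coef1M (p q : {poly R}) : (p * q)`_1 = p`_0 * q`_1 + p`_1 * q`_0.
Proof. by rewrite coefM big_ord_recr big_ord1 /= subn0 subnn. Qed.

Lemma coef_prod1 (I : Type) (r : seq I) (c : I -> R) :
  (\prod_(i <- r) (1 + 'X * (c i)%:P))`_0 = 1 /\
  (\prod_(i <- r) (1 + 'X * (c i)%:P))`_1 = \sum_(i <- r) c i.
Proof.
elim: r => [|x r [IH0 IH1]]; first by rewrite !big_nil !coef1.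
rewrite !big_cons coef0M coef1M IH0 IH1 !coefD coefXM coef1 /= coefC /=.
rewrite coefXM /= coefC /= addr0 add0r !mul1r mulr1; split => //; exact: addrC.
Qed.

Lemma J1 n (C : 'M[R]_n) : (\det (1%:M + 'X *: map_mx polyC C))`_1 = \tr C.
Proof.
set M := 1%:M + _.
have ME : forall i j, M i j = (i == j)%:R + 'X * (C i j)%:P.
  by move=> i j; rewrite !mxE.
rewrite /determinant coef_sum (bigD1 (1%g : 'S_n)) //= odd_perm1 expr0 mul1r.
have -> : \prod_i M i ((1%g : 'S_n) i) = \prod_(i <- index_enum 'I_n) (1 + 'X * (C i i)%:P).
  by apply: eq_bigr => i _; rewrite perm1 ME eqxx.
rewrite (coef_prod1 _ (fun i => C i i)).2 /mxtrace big_seq_cond.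
rewrite [X in _ + X = _]big1 ?addr0; last first.
  move=> s s1.
  have [i0 Hi0] : exists i0, s i0 != i0.
    apply/existsP; apply: contraT; rewrite negb_exists => /forallP h.
    move: s1; have -> : s = 1%g by apply/permP => i; rewrite perm1; have := h i; rewrite negbK => /eqP.
    by rewrite eqxx.
  have Hj0 : s (s i0) != s i0.
    apply: contra Hi0 => /eqP h; apply/eqP.
    by apply: (@perm_inj _ s); rewrite h.
  rewrite (bigD1 i0) //= (bigD1 (s i0)) /=; last by rewrite Hi0.
  rewrite !ME (eq_sym i0) (negbTE Hi0) (eq_sym (s i0)) (negbTE Hj0) !add0r.
  have -> : forall (a b : R) (q : {poly R}), 'X * a%:P * ('X * b%:P * q) = 'X * ('X * (a%:P * b%:P * q)).
    by move=> a b q; ring.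
  case: (odd_perm s); rewrite ?expr0 ?expr1 ?mul1r ?mulN1r ?coefN coefXM /= coefXM /= ?oppr0 //.
by apply: eq_bigl => i; rewrite mem_index_enum.
Qed.

Lemma J n (Y B : 'M[R]_n) : Y \in unitmx ->
  (pdet Y B)`_1 = \det Y * \tr (invmx Y *m B).
Proof.
move=> uY; rewrite /pdet.
have -> : map_mx polyC Y + 'X *: map_mx polyC B =
          map_mx polyC Y *m (1%:M + 'X *: map_mx polyC (invmx Y *m B)).
  by rewrite mulmxDr mulmx1 -scalemxAr -map_mxM mulKVmx.
by rewrite det_mulmx det_map_mx coefCM J1.
Qed.


Definition pmx n (Y B : 'M[R]_n) : 'M[{poly R}]_n :=
  map_mx polyC Y + 'X *: map_mx polyC B.

Lemma pmxE n (Y B : 'M[R]_n) h : map_mx (horner_eval h) (pmx Y B) = Y + h *: B.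
Proof. by apply/matrixP => i j; rewrite !mxE /= horner_evalE !hornerE. Qed.

Definition ptr n (Y A D : 'M[R]_n) : {poly R} :=
  \tr (\adj (pmx Y A) *m map_mx polyC D).

Lemma tr_map n (f : {rmorphism {poly R} -> R}) (M : 'M[{poly R}]_n) :
  \tr (map_mx f M) = f (\tr M).
Proof. by rewrite /mxtrace rmorph_sum; apply: eq_bigr => i _; rewrite mxE. Qed.

Lemma trinvE n (Y A D : 'M[R]_n) h : (Y + h *: A) \in unitmx ->
  \tr (invmx (Y + h *: A) *m D) = (ptr Y A D).[h] / (pdet Y A).[h].
Proof.
move=> u; rewrite pdetE /invmx u -scalemxAl mxtraceZ mulrC; congr (_ * _).
rewrite /ptr -horner_evalE -tr_map map_mxM map_mx_adj pmxE; congr (\tr (_ *m _)).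
by apply/matrixP => i j; rewrite !mxE /= horner_evalE hornerC.
Qed.

End ALG.

Section AN.
Local Open Scope classical_set_scope.
Variable R : realType.

Definition Lmx d n (A : 'I_d -> 'M[R]_n) (w : 'rV[R]_d) : 'M[R]_n :=
  \sum_k w 0 k *: A k.

Lemma LmxD d n (A : 'I_d -> 'M[R]_n) (a : R) (v w : 'rV[R]_d) :
  Lmx A (a *: v + w) = a *: Lmx A v + Lmx A w.
Proof.
rewrite /Lmx scaler_sumr -big_split; apply: eq_bigr => k _.
by rewrite !mxE scalerDl scalerA.
Qed.

Lemma line_quot d (F : 'rV[R]_d -> R) w v :
  (fun h : R => h^-1 *: ((F \o shift w) (h *: v) - F w)) =
  (fun h : R => h^-1 *: (((fun k : R => F (k *: v + w)) \o shift 0) (h *: 1)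
                         - (fun k : R => F (k *: v + w)) 0)).
Proof. by apply/funext => h /=; rewrite scale0r add0r addr0 scaler1. Qed.

Lemma derive_line d (F : 'rV[R]_d -> R) w v :
  'D_v F w = 'D_1 (fun k : R => F (k *: v + w)) 0.
Proof. by rewrite /derive line_quot. Qed.

Lemma derivable_line d (F : 'rV[R]_d -> R) w v :
  derivable F w v = derivable (fun k : R => F (k *: v + w)) 0 1.
Proof. by rewrite /derivable line_quot. Qed.

Lemma is_derive_quot (g : R -> R) (l : R) :
  (fun h => h^-1 * (g h - g 0)) @ 0^' --> l -> is_derive (0:R) 1 g l.
Proof.
move=> hl.
have E : (fun h : R => h^-1 *: ((g \o shift 0) (h *: 1) - g 0)) = (fun h => h^-1 * (g h - g 0)).
  by apply/funext => h /=; rewrite addr0 scaler1.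
have dg : derivable g 0 1 by rewrite /derivable E; apply/cvg_ex; exists l.
apply: DeriveDef => //; rewrite /derive E; exact: cvg_lim.
Qed.

Lemma near_pos (p : {poly R}) : 0 < p.[0] -> \forall h \near (0:R), 0 < p.[h].
Proof. by move=> h; exact: (cvgr_gt _ (@continuous_horner R p 0) _ h). Qed.

Lemma near_neq0 (p : {poly R}) : p.[0] != 0 -> \forall h \near (0:R), p.[h] != 0.
Proof. by move=> h; exact: (cvgr_neq0 _ (@continuous_horner R p 0) h). Qed.

Lemma ratcont (p q : {poly R}) : p.[0] != 0 ->
  (fun h => q.[h] / p.[h]) @ (0:R) --> q.[0] / p.[0].
Proof.
move=> p0; apply: cvgM; first exact: continuous_horner.
by apply: cvgV => //; exact: continuous_horner.
Qed.


Lemma base_d1 d n (Y0 : 'M[R]_n) (A : 'I_d -> 'M[R]_n) (w v : 'rV[R]_d) :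
  0 < \det (Y0 + Lmx A w) ->
  is_derive (0:R) 1 (fun k : R => ln (\det (Y0 + Lmx A (k *: v + w))))
    (\tr (invmx (Y0 + Lmx A w) *m Lmx A v)).
Proof.
move=> hpos; set Y := Y0 + Lmx A w; set B := Lmx A v.
have fE : (fun k : R => ln (\det (Y0 + Lmx A (k *: v + w)))) = (@ln R) \o horner (pdet Y B).
  apply/funext => k /=; rewrite pdetE LmxD /Y /B.
  by rewrite (addrC (k *: _)) addrA.
rewrite fE.
have p0 : (pdet Y B).[0] = \det Y by rewrite pdetE scale0r addr0.
have h1 : 0 < (pdet Y B).[0] by rewrite p0.
have uY : Y \in unitmx by rewrite unitmxE unitfE gt_eqF.
apply: is_derive_eq; first exact: (is_derive1_comp (is_derive1_ln h1) (is_derive_poly _ _)).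
rewrite p0 horner_coef0 coef_deriv mulr1n J // mulrA mulVf ?mul1r //.
by rewrite gt_eqF.
Qed.


Lemma inv_diff n (Y A : 'M[R]_n) h : Y \in unitmx -> (Y + h *: A) \in unitmx ->
  invmx (Y + h *: A) - invmx Y = - h *: (invmx (Y + h *: A) *m A *m invmx Y).
Proof.
move=> uY uh.
have -> : invmx (Y + h *: A) - invmx Y =
          invmx (Y + h *: A) *m (Y - (Y + h *: A)) *m invmx Y.
  by rewrite mulmxBr mulmxBl -mulmxA mulmxV // mulmx1 mulVmx // mul1mx.
by rewrite opprD addrA subrr add0r mulmxN mulNmx -scalemxAr -scalemxAl scaleNr.
Qed.

Lemma tr_inv_derive n (Y A C : 'M[R]_n) : Y \in unitmx ->
  is_derive (0:R) 1 (fun h : R => \tr (invmx (Y + h *: A) *m C))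
    (- \tr (invmx Y *m A *m invmx Y *m C)).
Proof.
move=> uY.
set D := A *m invmx Y *m C.
set p := pdet Y A; set q := ptr Y A D.
have p0 : p.[0] = \det Y by rewrite /p pdetE scale0r addr0.
have p0n : p.[0] != 0 by rewrite p0 -unitfE -unitmxE.
have nearU : \forall h \near (0:R), (Y + h *: A) \in unitmx.
  by apply: filterS (near_neq0 p0n) => h; rewrite /p pdetE unitmxE unitfE.
have quotE : forall h : R, h != 0 -> (Y + h *: A) \in unitmx ->
   h^-1 * (\tr (invmx (Y + h *: A) *m C) - \tr (invmx (Y + 0 *: A) *m C))
   = - (q.[h] / p.[h]).
  move=> h h0 uh; rewrite scale0r addr0 -trinvE //.
  rewrite -linearB /= -mulmxBl inv_diff // -scalemxAl linearZ /= /D !mulmxA.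
  by rewrite mulrA mulrN mulVf // mulN1r.
have val : - \tr (invmx Y *m A *m invmx Y *m C) = - (q.[0] / p.[0]).
  by rewrite -trinvE ?scale0r ?addr0 // /D !mulmxA.
rewrite val; apply: is_derive_quot.
have L : (fun h : R => - (q.[h] / p.[h])) @ 0^' --> - (q.[0] / p.[0]).
  by apply: cvg_within_filter; apply: cvgN; exact: ratcont.
apply: (cvg_trans _ L).
apply: near_eq_cvg; near=> h.
rewrite quotE //.
  by near: h; exact: nbhs_dnbhs_neq.
near: h; apply: cvg_within; exact: nearU.
Unshelve. all: by end_near.
Qed.


Definition D2 d (F : 'rV[R]_d -> R) (z : 'rV[R]_d) (H : 'rV[R]_d -> 'rV[R]_d -> R) :=
  forall u v : 'rV[R]_d,
    (\forall h \near (0:R), derivable (fun k : R => F (k *: v + (h *: u + z))) 0 1) /\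
    is_derive (0:R) 1 (fun h : R => 'D_1 (fun k : R => F (k *: v + (h *: u + z))) 0) (H u v).

Lemma D2_base d n (Y0 : 'M[R]_n) (A : 'I_d -> 'M[R]_n) z :
  0 < \det (Y0 + Lmx A z) ->
  D2 (fun w => ln (\det (Y0 + Lmx A w))) z
    (fun u v => - \tr (invmx (Y0 + Lmx A z) *m Lmx A u *m invmx (Y0 + Lmx A z) *m Lmx A v)).
Proof.
move=> hz u v; set Y := Y0 + Lmx A z.
have Yh : forall h : R, Y0 + Lmx A (h *: u + z) = Y + h *: Lmx A u.
  by move=> h; rewrite LmxD /Y (addrC (h *: _)) addrA.
have hnear : \forall h \near (0:R), 0 < \det (Y + h *: Lmx A u).
  have := @near_pos (pdet Y (Lmx A u)); rewrite pdetE scale0r addr0 => /(_ hz).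
  by apply: filterS => h; rewrite pdetE.
split.
  apply: filterS hnear => h hh.
  by have := @base_d1 _ _ Y0 A (h *: u + z) v; rewrite Yh => /(_ hh) [].
have uY : Y \in unitmx by rewrite unitmxE unitfE gt_eqF.
apply: near_eq_is_derive (tr_inv_derive _ _ uY).
apply: filterS hnear => h hh.
by have := @base_d1 _ _ Y0 A (h *: u + z) v; rewrite Yh => /(_ hh) [_ ->].
Qed.

Lemma D2_ext d (F G : 'rV[R]_d -> R) z H : (forall x, F x = G x) -> D2 G z H -> D2 F z H.
Proof. by move=> e; have -> : F = G by apply/funext. Qed.

Lemma D2_Hext d (F : 'rV[R]_d -> R) z H H' : (forall u v, H u v = H' u v) ->
  D2 F z H' -> D2 F z H.
Proof. by move=> e; have -> : H = H' by apply/funext => u; apply/funext => v. Qed.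

Lemma D2_add d (F G : 'rV[R]_d -> R) z H1 H2 : D2 F z H1 -> D2 G z H2 ->
  D2 (fun x => F x + G x) z (fun u v => H1 u v + H2 u v).
Proof.
move=> hF hG u v; have [n1 d1] := hF u v; have [n2 d2] := hG u v.
split.
  by apply: filterS2 n1 n2 => h a b; exact: derivableD a b.
apply: near_eq_is_derive (is_deriveD d1 d2).
by apply: filterS2 n1 n2 => h a b /=; rewrite deriveD.
Qed.

Lemma D2_sub d (F G : 'rV[R]_d -> R) z H1 H2 : D2 F z H1 -> D2 G z H2 ->
  D2 (fun x => F x - G x) z (fun u v => H1 u v - H2 u v).
Proof.
move=> hF hG u v; have [n1 d1] := hF u v; have [n2 d2] := hG u v.
split.
  by apply: filterS2 n1 n2 => h a b; exact: derivableB a b.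
apply: near_eq_is_derive (is_deriveB d1 d2).
by apply: filterS2 n1 n2 => h a b /=; rewrite deriveB.
Qed.

Lemma D2_scale d (F : 'rV[R]_d -> R) z H c : D2 F z H ->
  D2 (fun x => c * F x) z (fun u v => c * H u v).
Proof.
move=> hF u v; have [n1 d1] := hF u v.
split.
  by apply: filterS n1 => h a; exact: derivableZ a.
have h2 : is_derive (0:R) 1 (fun h : R => 'D_1 (fun k : R => c * F (k *: v + (h *: u + z))) 0) (c *: H u v).
  apply: near_eq_is_derive (is_deriveZ c d1).
  by apply: filterS n1 => h a /=; rewrite deriveZ.
exact: h2.
Qed.

Lemma D2_cst d (c : R) (z : 'rV[R]_d) : D2 (fun _ => c) z (fun _ _ => 0).
Proof.
move=> u v; split; first by near=> h; exact: derivable_cst.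
have -> : (fun h : R => 'D_1 (fun k : R => c) 0) = cst 0.
  by apply/funext => h; exact: (derive_cst c).
exact: is_derive_cst.
Unshelve. all: by end_near.
Qed.

Lemma D2_sum d J (F : 'I_J -> 'rV[R]_d -> R) z H :
  (forall j, D2 (F j) z (H j)) ->
  D2 (fun x => \sum_(j < J) F j x) z (fun u v => \sum_(j < J) H j u v).
Proof.
elim: J F H => [|J IH] F H hF.
  apply: (D2_ext (G := fun _ => 0)) => [x|]; first by rewrite big_ord0.
  by apply: D2_Hext (D2_cst 0 z) => u v; rewrite big_ord0.
apply: (D2_ext (G := fun x => \sum_(j < J) F (widen_ord (leqnSn J) j) x + F ord_max x)).
  by move=> x; rewrite big_ord_recr.
apply: D2_Hext (D2_add (IH _ _ (fun j => hF _)) (hF ord_max)) => u v.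
by rewrite big_ord_recr.
Qed.


Lemma D2_near d (F G : 'rV[R]_d -> R) z H :
  (forall u v, \forall h \near (0:R), \forall k \near (0:R),
      F (k *: v + (h *: u + z)) = G (k *: v + (h *: u + z))) ->
  D2 G z H -> D2 F z H.
Proof.
move=> e hG u v; have [n1 d1] := hG u v; have n2 := e u v.
split.
  apply: filterS2 n1 n2 => h a b; apply: near_eq_derivable a.
  by apply: filterS b => k ->.
apply: near_eq_is_derive d1.
apply: filterS2 n1 n2 => h a b; apply: near_eq_derive.
by apply: filterS b => k ->.
Qed.

Lemma hess_D2 d (F : 'rV[R]_d -> R) z H : D2 F z H ->
  \matrix_(a, b) 'D_(delta_mx 0 a) ('D_(delta_mx 0 b) F) z =
  \matrix_(a, b) H (delta_mx 0 a) (delta_mx 0 b).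
Proof.
move=> hF; apply/matrixP => a b; rewrite !mxE derive_line.
have -> : (fun k : R => 'D_(delta_mx 0 b) F (k *: delta_mx 0 a + z)) =
   (fun h : R => 'D_1 (fun k : R => F (k *: delta_mx 0 b + (h *: delta_mx 0 a + z))) 0).
  by apply/funext => h; rewrite derive_line.
by have [_ [_ ->]] := hF (delta_mx 0 a) (delta_mx 0 b).
Qed.

Definition bil d (H : 'rV[R]_d -> 'rV[R]_d -> R) :=
  (forall a u1 u2 v, H (a *: u1 + u2) v = a * H u1 v + H u2 v) /\
  (forall a u v1 v2, H u (a *: v1 + v2) = a * H u v1 + H u v2).

Lemma bil_sumL d (H : 'rV[R]_d -> 'rV[R]_d -> R) (I : Type) (r : seq I) (c : I -> R) u v :
  (forall a u1 u2 v, H (a *: u1 + u2) v = a * H u1 v + H u2 v) ->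
  H (\sum_(i <- r) c i *: u i) v = \sum_(i <- r) c i * H (u i) v.
Proof.
move=> hl.
have H0 : H 0 v = 0.
  by have := hl 1 0 0 v; rewrite scale1r addr0 mul1r; lra.
elim: r => [|x r IH]; first by rewrite !big_nil.
by rewrite !big_cons hl IH.
Qed.

Lemma bil_sumR d (H : 'rV[R]_d -> 'rV[R]_d -> R) (I : Type) (r : seq I) (c : I -> R) u v :
  (forall a u v1 v2, H u (a *: v1 + v2) = a * H u v1 + H u v2) ->
  H u (\sum_(i <- r) c i *: v i) = \sum_(i <- r) c i * H u (v i).
Proof.
move=> hl.
have H0 : H u 0 = 0.
  by have := hl 1 u 0 0; rewrite scale1r addr0 mul1r; lra.
elim: r => [|x r IH]; first by rewrite !big_nil.
by rewrite !big_cons hl IH.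
Qed.

Lemma qf_hess d (H : 'rV[R]_d -> 'rV[R]_d -> R) (v : 'rV[R]_d) : bil H ->
  (v *m (\matrix_(a, b) H (delta_mx 0 a) (delta_mx 0 b)) *m v^T) 0 0 = H v v.
Proof.
move=> [hl hr].
rewrite {3 4}[v]row_sum_delta bil_sumL // -mulmxA mxE.
apply: eq_bigr => a _; rewrite bil_sumR // mxE; congr (_ * _).
by apply: eq_bigr => b _; rewrite !mxE mulrC.
Qed.


Lemma bil_base d n (P : 'M[R]_n) (A : 'I_d -> 'M[R]_n) :
  bil (fun u v => - \tr (P *m Lmx A u *m P *m Lmx A v)).
Proof.
split=> a u1 u2 v; rewrite LmxD.
  rewrite !(mulmxDr, mulmxDl) -!scalemxAr -!scalemxAl mxtraceD mxtraceZ; ring.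
rewrite !(mulmxDr, mulmxDl) -!scalemxAr mxtraceD mxtraceZ; ring.
Qed.

Lemma bil_add d (H1 H2 : 'rV[R]_d -> 'rV[R]_d -> R) : bil H1 -> bil H2 ->
  bil (fun u v => H1 u v + H2 u v).
Proof. by move=> [l1 r1] [l2 r2]; split=> *; rewrite ?l1 ?l2 ?r1 ?r2; ring. Qed.

Lemma bil_sub d (H1 H2 : 'rV[R]_d -> 'rV[R]_d -> R) : bil H1 -> bil H2 ->
  bil (fun u v => H1 u v - H2 u v).
Proof. by move=> [l1 r1] [l2 r2]; split=> *; rewrite ?l1 ?l2 ?r1 ?r2; ring. Qed.

Lemma bil_scale d (H : 'rV[R]_d -> 'rV[R]_d -> R) c : bil H ->
  bil (fun u v => c * H u v).
Proof. by move=> [l1 r1]; split=> *; rewrite ?l1 ?r1; ring. Qed.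

Lemma bil_cst0 d : bil (fun _ _ : 'rV[R]_d => 0).
Proof. by split=> *; ring. Qed.

Lemma bil_sum d J (H : 'I_J -> 'rV[R]_d -> 'rV[R]_d -> R) : (forall j, bil (H j)) ->
  bil (fun u v => \sum_(j < J) H j u v).
Proof.
move=> hH; split=> a u1 u2 v.
  by rewrite mulr_sumr -big_split; apply: eq_bigr => j _; have [-> _] := hH j.
by rewrite mulr_sumr -big_split; apply: eq_bigr => j _; have [_ ->] := hH j.
Qed.

End AN.

Section KEY.
Variable R : rcfType.

Lemma sym_conj m n (H : 'M[R]_(n, m)) (A : 'M[R]_m) : sym A -> sym (H *m A *m H^T).
Proof. by move=> sA; rewrite /sym !trmx_mul trmxK sA mulmxA. Qed.

Lemma psd_conj2 m n (H : 'M[R]_(n, m)) (A : 'M[R]_m) : psd A -> psd (H *m A *m H^T).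
Proof. by move=> pA u; rewrite -[H in H *m A]trmxK qf_mul; exact: pA. Qed.

Lemma pd_add_psd n (A B : 'M[R]_n) : pd A -> psd B -> pd (A + B).
Proof. by move=> pA pB v v0; rewrite qfD ltr_wpDr // pA. Qed.

Lemma sym_add n (A B : 'M[R]_n) : sym A -> sym B -> sym (A + B).
Proof. by move=> sA sB; rewrite /sym linearD /= sA sB. Qed.

Lemma tr11_ge0 (P A : 'M[R]_1) : 0 <= \tr (P *m A *m P *m A).
Proof.
rewrite trace_mx11 !mxE !big_ord1 !mxE !big_ord1 !mxE !big_ord1.
set p := P 0 0; set a := A 0 0.
have -> : p * a * p * a = (p * a) ^+ 2 by rewrite expr2; ring.
exact: sqr_ge0.
Qed.

Lemma pd_psdW n (A : 'M[R]_n) : pd A -> psd A.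
Proof. exact: pd_psd. Qed.

Lemma keyY n (K M D : 'M[R]_n) : sym K -> pd K -> sym M -> psd M -> sym D ->
  \tr (invmx (K + M) *m D *m invmx (K + M) *m D) <= \tr (invmx K *m D *m invmx K *m D).
Proof.
move=> sK pK sM pM sD.
have sKM := sym_add sK sM; have pKM := pd_add_psd pK pM.
have uKM := pd_unit pKM.
apply: tr_mono => //.
- exact: sym_inv.
- exact: sym_inv.
- move=> u; rewrite qfB subr_ge0.
  have := variational u (invmx (K + M) *m u) sK pK.
  set a := qf u (invmx (K + M)).
  have e1 : ((invmx (K + M) *m u)^T *m u) 0 0 = a.
    by rewrite trmx_mul (sym_inv sKM).
  have e2 : qf (invmx (K + M) *m u) K <= a.
    have : qf (invmx (K + M) *m u) (K + M) = a.
      by rewrite /qf trmx_mul (sym_inv sKM) !mulmxA -[_ *m (K + M)]mulmxA mulVmx // mulmx1.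
    rewrite qfD => <-; rewrite lerDl; exact: pM.
  rewrite e1 => h; lra.
- exact/pd_psd/pd_inv.
- exact/pd_psd/pd_inv.
Qed.


Lemma psd_W m n (H2 : 'M[R]_(n, m)) : psd (H2^T *m H2).
Proof.
move=> u; have -> : H2^T *m H2 = H2^T *m 1%:M *m H2 by rewrite mulmx1.
by rewrite qf_mul; apply: pd_psd; exact: pd1.
Qed.

Lemma det_pos1 n m (K : 'M[R]_n) (H : 'M[R]_(n, m)) (Rm : 'M[R]_m) :
  sym K -> pd K -> sym Rm -> pd Rm -> 0 < \det (1%:M + invmx K *m H *m Rm *m H^T).
Proof.
move=> sK pK sR pR; have uK := pd_unit pK.
have -> : 1%:M + invmx K *m H *m Rm *m H^T = invmx K *m (K + H *m Rm *m H^T).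
  by rewrite mulmxDr mulVmx // !mulmxA.
rewrite det_mulmx det_inv; apply: mulr_gt0.
  by rewrite invr_gt0; exact: det_pd.
apply: det_pd; first by apply: sym_add => //; exact: sym_conj.
by apply: pd_add_psd => //; apply: psd_conj2; exact: pd_psd.
Qed.

Lemma det_pos2 m n (H2 : 'M[R]_(n, m)) (Rm : 'M[R]_m) :
  sym Rm -> pd Rm -> 0 < \det (1%:M + H2^T *m H2 *m Rm).
Proof.
move=> sR pR; have uR := pd_unit pR.
have -> : 1%:M + H2^T *m H2 *m Rm = (invmx Rm + H2^T *m H2) *m Rm.
  by rewrite mulmxDl mulVmx.
rewrite det_mulmx; apply: mulr_gt0; last exact: det_pd.
apply: det_pd.
  by apply: sym_add; [exact: sym_inv | rewrite /sym trmx_mul trmxK].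
by apply: pd_add_psd; [exact: pd_inv | exact: psd_W].
Qed.


Lemma trAB n (A B : 'M[R]_n) : \tr (A *m B *m A *m B) = \tr ((A *m B) *m (A *m B)).
Proof. by rewrite !mulmxA. Qed.

Lemma keyX m n1 n2 (Rm : 'M[R]_m) (N : 'M[R]_(n1, n2)) (H1 : 'M[R]_(n1, m))
    (H2 : 'M[R]_(n2, m)) (V : 'M[R]_m) :
  sym Rm -> pd Rm -> pd (block_mx 1%:M N N^T 1%:M) -> sym V ->
  \tr (invmx (1%:M + H2^T *m H2 *m Rm) *m (H2^T *m H2 *m V) *m
       invmx (1%:M + H2^T *m H2 *m Rm) *m (H2^T *m H2 *m V))
  <= \tr (invmx (1%:M + invmx (block_mx 1%:M N N^T 1%:M) *m col_mx H1 H2 *m Rm *m (col_mx H1 H2)^T)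
          *m (invmx (block_mx 1%:M N N^T 1%:M) *m col_mx H1 H2 *m V *m (col_mx H1 H2)^T) *m
          invmx (1%:M + invmx (block_mx 1%:M N N^T 1%:M) *m col_mx H1 H2 *m Rm *m (col_mx H1 H2)^T)
          *m (invmx (block_mx 1%:M N N^T 1%:M) *m col_mx H1 H2 *m V *m (col_mx H1 H2)^T)).
Proof.
move=> sR pR pK sV.
set K := block_mx 1%:M N N^T 1%:M; set H := col_mx H1 H2.
have sK : sym K by rewrite /sym /K tr_block_mx !trmx1 trmxK.
have uK := pd_unit pK.
set M := K + H *m Rm *m H^T.
set M2 := 1%:M + H2 *m Rm *m H2^T.
have sM : sym M := sym_add sK (sym_conj H sR).
have pM : pd M := pd_add_psd pK (psd_conj2 H (pd_psd pR)).
have sM2 : sym M2 := sym_add (@sym1 _ _) (sym_conj H2 sR).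
have pM2 : pd M2 := pd_add_psd (@pd1 _ _) (psd_conj2 H2 (pd_psd pR)).
have uM := pd_unit pM; have uM2 := pd_unit pM2.
set P1 := invmx M; set P2 := invmx M2.
set X1 := H^T *m P1 *m H; set X2 := H2^T *m P2 *m H2.
set Y := 1%:M + invmx K *m H *m Rm *m H^T.
have KY : K *m Y = M by rewrite /Y mulmxDr mulmx1 !mulmxA mulmxV // mul1mx.
have uY : Y \in unitmx by move: uM; rewrite -KY unitmx_mul => /andP[].
have E1 : invmx Y *m invmx K = P1.
  have h : M *m (invmx Y *m invmx K) = 1%:M.
    by rewrite -KY mulmxA -(mulmxA K) mulmxV // mulmx1 mulmxV.
  by rewrite -[invmx Y *m invmx K]mul1mx -(mulVmx uM) -mulmxA h mulmx1.
set Y2 := 1%:M + H2^T *m H2 *m Rm.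
have Y2H : Y2 *m H2^T = H2^T *m M2.
  by rewrite /Y2 /M2 mulmxDl mulmxDr mul1mx mulmx1 !mulmxA.
have uY2 : Y2 \in unitmx by rewrite unitmxE unitfE gt_eqF // det_pos2.
have E2' : invmx Y2 *m H2^T = H2^T *m P2.
  rewrite -[invmx Y2 *m H2^T]mulmx1 -(mulmxV uM2) mulmxA -(mulmxA (invmx Y2)) -Y2H.
  by rewrite mulmxA mulVmx // mul1mx.
have AB1 : invmx Y *m (invmx K *m H *m V *m H^T) = P1 *m H *m V *m H^T.
  by rewrite !mulmxA E1.
have AB2 : invmx Y2 *m (H2^T *m H2 *m V) = X2 *m V.
  by rewrite !mulmxA E2'.
rewrite (trAB (invmx Y2) (H2^T *m H2 *m V)) AB2 mulmxA.
rewrite (trAB (invmx Y) (invmx K *m H *m V *m H^T)) AB1.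
have -> : \tr (P1 *m H *m V *m H^T *m (P1 *m H *m V *m H^T)) = \tr (X1 *m V *m X1 *m V).
  by rewrite !mulmxA mxtrace_mulC /X1 !mulmxA.
apply: tr_mono => //.
- by rewrite /sym /X1 !trmx_mul trmxK (sym_inv sM) mulmxA.
- by rewrite /sym /X2 !trmx_mul trmxK (sym_inv sM2) mulmxA.
- move=> u; rewrite qfB /X1 /X2 !qf_mul subr_ge0.
  set w := H2 *m u; set a := P2 *m w.
  have := variational (H *m u) (col_mx 0 a) sM pM.
  have e1 : ((col_mx 0 a)^T *m (H *m u)) 0 0 = qf w P2.
    rewrite tr_col_mx trmx0 /H mul_col_mx mul_row_col mul0mx add0r /a trmx_mul.
    by rewrite (sym_inv sM2).
  have e2 : qf (col_mx 0 a) M = qf w P2.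
    have zH : (col_mx 0 a)^T *m H = a^T *m H2.
      by rewrite tr_col_mx trmx0 /H mul_row_col mul0mx add0r.
    have -> : qf (col_mx 0 a) M = qf a M2.
      rewrite /qf /M /M2 mulmxDr mulmxDl.
      have -> : (col_mx 0 a)^T *m (H *m Rm *m H^T) *m col_mx 0 a =
                ((col_mx 0 a)^T *m H) *m Rm *m ((col_mx 0 a)^T *m H)^T.
        by rewrite trmx_mul trmxK !mulmxA.
      rewrite zH (trmx_mul a^T H2) trmxK !mulmxA.
      rewrite tr_col_mx trmx0 /K mul_row_block !mul0mx !add0r mulmx1 mul_row_col mulmx0 add0r.
      by rewrite /a mulmxDr mulmxDl mulmx1 !mulmxA !mulmxDl.
    rewrite /qf /a trmx_mul (sym_inv sM2) -!mulmxA (mulmxA M2) mulmxV // mul1mx.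
    by rewrite !mulmxA.
  rewrite e1 e2 => h; lra.
- by move=> u; rewrite /X1 qf_mul; apply: pd_psd; exact: pd_inv.
- by move=> u; rewrite /X2 qf_mul; apply: pd_psd; exact: pd_inv.
Qed.

End KEY.

Section LP.

Lemma mem_lowpairs m (p : 'I_m * 'I_m) : (p \in lowpairs m) = (p.2 <= p.1)%N.
Proof.
apply/idP/idP.
  by case/allpairsPdep => j [i [_ + ->]]; rewrite mem_filter => /andP[].
case: p => i j /= h; apply/allpairsPdep; exists j, i.
by rewrite mem_enum mem_filter mem_enum h.
Qed.

Lemma uniq_lowpairs m : uniq (lowpairs m).
Proof.
apply: allpairs_uniq_dep; first exact: enum_uniq.
  by move=> j _; apply: filter_uniq; exact: enum_uniq.
by move=> [x1 y1] [x2 y2] _ _ /= [-> ->].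
Qed.

End LP.

Section RM.
Variable R : realType.

Lemma Rmat_sym m (x : 'rV[R]_(nx m)) : (Rmat x)^T = Rmat x.
Proof.
apply/matrixP => i j; rewrite !mxE; apply: eq_bigr => k _.
by rewrite (set_nth_default (i, j) (j, i)) 1?orbC //; exact: ltn_ord.
Qed.


Lemma Rmat_nth m (x : 'rV[R]_(nx m)) (k : 'I_(nx m)) x0 :
  Rmat x (nth x0 (lowpairs m) k).1 (nth x0 (lowpairs m) k).2 = x 0 k.
Proof.
set q := nth x0 (lowpairs m) k.
have kq : forall k' : 'I_(nx m), nth (q.1, q.2) (lowpairs m) k' = nth x0 (lowpairs m) k'.
  by move=> k'; apply: set_nth_default; exact: ltn_ord.
have qin : q \in lowpairs m by apply: mem_nth; exact: ltn_ord.
have qq : (q.1, q.2) = q by case: (q).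
rewrite mxE; under eq_bigr => k0 _ do rewrite (set_nth_default x0 _ (ltn_ord k0)).
rewrite (bigD1 k) //= -/q qq eqxx /= big1 ?addr0 //.
move=> k' nk; case: ifP => // /orP [] /eqP h.
  have := nth_uniq x0 (ltn_ord k') (ltn_ord k) (uniq_lowpairs m).
  rewrite h eqxx => /esym/eqP hk.
  by move: nk; rewrite (_ : k' = k) ?eqxx //; exact: val_inj.
have q12 : q.1 = q.2.
  have : (q.2, q.1) \in lowpairs m by rewrite -h mem_nth // ltn_ord.
  rewrite mem_lowpairs /= => h1; move: qin; rewrite mem_lowpairs => h2.
  by apply/val_inj/eqP; rewrite eqn_leq h1 h2.
have qq' : (q.2, q.1) = q by rewrite -q12 {2}q12.
move: h; rewrite qq' => h.
have := nth_uniq x0 (ltn_ord k') (ltn_ord k) (uniq_lowpairs m).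
rewrite h eqxx => /esym/eqP hk.
by move: nk; rewrite (_ : k' = k) ?eqxx //; exact: val_inj.
Qed.


Lemma veh_nth m (A : 'M[R]_m) (k : 'I_(nx m)) x0 :
  veh A 0 k = A (nth x0 (lowpairs m) k).1 (nth x0 (lowpairs m) k).2.
Proof.
set q := nth x0 (lowpairs m) k.
have qq : (q.1, q.2) = q by case: (q).
rewrite mxE.
under eq_bigr => i0 _ do under eq_bigr => j0 _ do
  rewrite (set_nth_default x0 (i0, j0) (ltn_ord k)) -/q.
rewrite (bigD1 q.1) //= (bigD1 q.2) //= qq eqxx big1 ?addr0.
  rewrite big1 ?addr0 // => i0 ni0; apply: big1 => j0 _.
  by case: ifP => // /eqP h; move: ni0; rewrite h eqxx.
by move=> j0 nj0; case: ifP => // /eqP h; move: nj0; rewrite h eqxx.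
Qed.

Lemma Rmat_veh m (A : 'M[R]_m) : A^T = A -> Rmat (veh A) = A.
Proof.
move=> sA.
have key : forall i j : 'I_m, (j <= i)%N -> Rmat (veh A) i j = A i j.
  move=> i j ji; have mem : (i, j) \in lowpairs m by rewrite mem_lowpairs.
  have kl : (index (i, j) (lowpairs m) < nx m)%N by rewrite /nx index_mem.
  have := Rmat_nth (veh A) (Ordinal kl) (i, j).
  rewrite /= nth_index //= => ->.
  by rewrite (veh_nth A (Ordinal kl) (i, j)) /= nth_index.
apply/matrixP => i j; case: (leqP j i) => [|/ltnW] h; first exact: key.
by rewrite -Rmat_sym mxE key // -{2}sA mxE.
Qed.

Lemma Rmat_lin m (a : R) (u w : 'rV[R]_(nx m)) :
  Rmat (a *: u + w) = a *: Rmat u + Rmat w.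
Proof.
apply/matrixP => i j; rewrite !mxE mulr_sumr -big_split; apply: eq_bigr => k _.
by case: ifP => _; rewrite ?mxE /= ?mulr0 ?addr0.
Qed.

Lemma Rmat_inj m (v : 'rV[R]_(nx m)) (x0 : 'I_m * 'I_m) : Rmat v = 0 -> v = 0.
Proof.
by move=> h; apply/rowP => k; rewrite -(Rmat_nth v k x0) h !mxE.
Qed.

End RM.

Section LIN.
Variable R : realType.

Definition lin d n (f : 'rV[R]_d -> 'M[R]_n) :=
  forall (a : R) u w, f (a *: u + w) = a *: f u + f w.

Lemma lin_Lmx d n (f : 'rV[R]_d -> 'M[R]_n) : lin f ->
  forall x, f x = Lmx (fun k => f (delta_mx 0 k)) x.
Proof.
move=> hf x.
have f0 : f 0 = 0.
  by have := hf 1 0 0; rewrite !scale1r addr0 -{1}[f 0]addr0 => /addrI <-.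
rewrite {1}[x]row_sum_delta /Lmx.
elim: (index_enum _) => [|k r IH]; first by rewrite !big_nil.
by rewrite !big_cons hf IH.
Qed.

Lemma lin_mul d m n (f : 'rV[R]_d -> 'M[R]_m) (P : 'M[R]_(n, m)) (Q : 'M[R]_(m, n)) :
  lin f -> lin (fun x => P *m f x *m Q).
Proof.
by move=> hf a u w; rewrite hf mulmxDr mulmxDl -scalemxAr -scalemxAl.
Qed.

Lemma lin_trs d m (f : 'rV[R]_d -> 'M[R]_m) (P : 'M[R]_m) :
  lin f -> lin (fun x => (- \tr (P *m f x))%:M : 'M[R]_1).
Proof.
move=> hf a u w; rewrite hf mulmxDr -scalemxAr mxtraceD mxtraceZ.
by apply/matrixP => i j; rewrite !mxE; ring.
Qed.

Lemma lin_Rmat m : lin (@Rmat R m).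
Proof. by move=> a u w; exact: Rmat_lin. Qed.

Lemma D2_lin d n (Y0 : 'M[R]_n) (f : 'rV[R]_d -> 'M[R]_n) z : lin f ->
  0 < \det (Y0 + f z) ->
  D2 (fun w => ln (\det (Y0 + f w))) z
     (fun u v => - \tr (invmx (Y0 + f z) *m f u *m invmx (Y0 + f z) *m f v)).
Proof.
move=> hf hz.
apply: (D2_ext (G := fun w => ln (\det (Y0 + Lmx (fun k => f (delta_mx 0 k)) w)))).
  by move=> w; rewrite -lin_Lmx.
apply: D2_Hext; last by apply: D2_base; rewrite -lin_Lmx.
by move=> u v; rewrite -!lin_Lmx.
Qed.

Lemma bil_lin d n (P : 'M[R]_n) (f : 'rV[R]_d -> 'M[R]_n) : lin f ->
  bil (fun u v => - \tr (P *m f u *m P *m f v)).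
Proof.
move=> hf.
have -> : (fun u v => - \tr (P *m f u *m P *m f v)) =
          (fun u v => - \tr (P *m Lmx (fun k => f (delta_mx 0 k)) u *m P *m
                             Lmx (fun k => f (delta_mx 0 k)) v)).
  by apply/funext => u; apply/funext => v; rewrite -!lin_Lmx.
exact: bil_base.
Qed.

Definition Kmat0 n1 n2 (N : 'M[R]_(n1, n2)) : 'M[R]_(n1 + n2) := block_mx 0 N N^T 0.

Lemma Kmat_split n1 n2 (N : 'M[R]_(n1, n2)) : Kmat N = 1%:M + Kmat0 N.
Proof. by rewrite /Kmat /Kmat0 (scalar_mx_block n1 n2 1) add_block_mx !addr0 !add0r. Qed.

Lemma Kmat0_sym n1 n2 (N : 'M[R]_(n1, n2)) : (Kmat0 N)^T = Kmat0 N.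
Proof. by rewrite /Kmat0 tr_block_mx trmxK !trmx0. Qed.

Lemma Nmat_vecN n1 n2 (N : 'M[R]_(n1, n2)) : Nmat (vecN N) = N.
Proof. by rewrite /Nmat /vecN mxvecK trmxK. Qed.

Lemma lin_K0N n1 n2 : lin (fun y : 'rV[R]_(n2 * n1) => Kmat0 (Nmat y)).
Proof.
move=> a u w.
have -> : Nmat (a *: u + w) = a *: Nmat u + Nmat w.
  by apply/matrixP => i j; rewrite !mxE.
by rewrite /Kmat0 scale_block_mx add_block_mx linearD linearZ /= !scaler0 !addr0.
Qed.

Lemma K0N_inj n1 n2 (v : 'rV[R]_(n2 * n1)) : Kmat0 (Nmat v) = 0 -> v = 0.
Proof.
rewrite /Kmat0 -block_mx0 => /eq_block_mx [_ h _ _].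
have : vec_mx v = 0 by rewrite -[vec_mx v]trmxK; move: h; rewrite /Nmat => ->; rewrite trmx0.
by move=> h2; rewrite -[v]vec_mxK h2 linear0.
Qed.


Lemma near2_pos d n (Y0 : 'M[R]_n) (f : 'rV[R]_d -> 'M[R]_n) z : lin f ->
  0 < \det (Y0 + f z) -> forall u v,
  \forall h \near (0:R), \forall k \near (0:R), 0 < \det (Y0 + f (k *: v + (h *: u + z))).
Proof.
move=> hf hz u v.
have E : forall h k : R, Y0 + f (k *: v + (h *: u + z)) = (Y0 + f z + h *: f u) + k *: f v.
  by move=> h k; rewrite !hf; apply/matrixP => i j; rewrite !mxE; ring.
have n1 : \forall h \near (0:R), 0 < \det (Y0 + f z + h *: f u).
  have := @near_pos R (pdet (Y0 + f z) (f u)); rewrite pdetE scale0r addr0 => /(_ hz).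
  by apply: filterS => h; rewrite pdetE.
apply: filterS n1 => h hh.
have := @near_pos R (pdet (Y0 + f z + h *: f u) (f v)); rewrite pdetE scale0r addr0 => /(_ hh).
by apply: filterS => k; rewrite pdetE E.
Qed.

End LIN.

Theorem lemma1 (R : realType) (m n1 n2 J : nat) (n3 : 'I_J -> nat)
    (H1 : 'M[R]_(n1, m)) (H2 : 'M[R]_(n2, m)) (H3 : forall j : 'I_J, 'M[R]_(n3 j, m))
    (PT : R) (PI : 'I_J -> R)
    (hm : (1 <= m)%N) (hn1 : (1 <= n1)%N) (hn2 : (1 <= n2)%N)
    (hPT : 0 < PT) (hPI : forall j, 0 < PI j)
    (t : R) (ht : 0 < t)
    (Rm : 'M[R]_m) (N : 'M[R]_(n1, n2))
    (hRsym : symmx Rm) (hRpd : posdef Rm) (hRtr : \tr Rm < PT)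
    (hRI : forall j, \tr ((H3 j)^T *m H3 j *m Rm) < PI j)
    (hK : posdef (Kmat N)) :
  \det (hessian (fun x => ft_xy H1 H2 H3 PT PI t x (vecN N)) (veh Rm)) != 0 /\
  \det (hessian (fun y => ft_xy H1 H2 H3 PT PI t (veh Rm) y) (vecN N)) != 0.
Proof.
set s := t^-1.
have s0 : 0 < s by rewrite invr_gt0.
set K := Kmat N.
set H := Hmat H1 H2.
have sR : sym Rm := hRsym.
have pR : pd Rm := hRpd.
have pK : pd K := hK.
have sK : sym K by rewrite /sym /K /Kmat tr_block_mx !trmx1 trmxK.
have uK := pd_unit pK.
have RE : Rmat (veh Rm) = Rm := Rmat_veh hRsym.
have KE : Kmat (Nmat (vecN N)) = K by rewrite Nmat_vecN.
pose x0 := (Ordinal hm, Ordinal hm).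
split.
- pose f1 := fun x : 'rV[R]_(nx m) => invmx K *m H *m Rmat x *m H^T.
  pose f2 := fun x : 'rV[R]_(nx m) => (H2^T *m H2) *m Rmat x *m 1%:M.
  pose f4 := fun x : 'rV[R]_(nx m) => (- \tr (1%:M *m Rmat x))%:M : 'M[R]_1.
  pose f5 := fun j (x : 'rV[R]_(nx m)) => (- \tr ((H3 j)^T *m H3 j *m Rmat x))%:M : 'M[R]_1.
  have l1 : lin f1 := lin_mul _ _ (@lin_Rmat R m).
  have l2 : lin f2 := lin_mul _ _ (@lin_Rmat R m).
  have l3 : lin (@Rmat R m) := @lin_Rmat R m.
  have l4 : lin f4 := lin_trs _ (@lin_Rmat R m).
  have l5 : forall j, lin (f5 j) := fun j => lin_trs _ (@lin_Rmat R m).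
  have d1 : 0 < \det (1%:M + f1 (veh Rm)) by rewrite /f1 RE; exact: det_pos1.
  have d2 : 0 < \det (1%:M + f2 (veh Rm)) by rewrite /f2 RE mulmx1; exact: det_pos2.
  have d3 : 0 < \det (0 + Rmat (veh Rm)) by rewrite add0r RE; exact: det_pd.
  have d4 : 0 < \det (PT%:M + f4 (veh Rm)).
    by rewrite /f4 det_mx11 !mxE eqxx !mulr1n RE mul1mx; lra.
  have d5 : forall j, 0 < \det ((PI j)%:M + f5 j (veh Rm)).
    by move=> j; rewrite /f5 det_mx11 !mxE eqxx !mulr1n RE; have := hRI j; lra.
  pose G := fun x => ((ln (\det (1%:M + f1 x)) - ln (\det (1%:M + f2 x)))
     + s * ln (\det (0 + Rmat x)) + s * ln (\det (PT%:M + f4 x))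
     + \sum_(j < J) s * ln (\det ((PI j)%:M + f5 j x))) - s * ln (\det K).
  have GE : forall x, ft_xy H1 H2 H3 PT PI t x (vecN N) = G x.
    move=> x; rewrite /ft_xy /ft /f /= KE /G /f1 /f2 /f4 /f5 add0r mulmx1.
    rewrite det_mx11 !mxE eqxx !mulr1n mul1mx.
    by under [in RHS]eq_bigr => j _ do rewrite det_mx11 !mxE eqxx !mulr1n.
  have D2F := D2_ext GE (D2_sub (D2_add (D2_add (D2_add
     (D2_sub (D2_lin l1 d1) (D2_lin l2 d2)) (D2_scale s (D2_lin l3 d3)))
     (D2_scale s (D2_lin l4 d4)))
     (D2_sum (fun j => D2_scale s (D2_lin (l5 j) (d5 j))))) (D2_cst (s * ln (\det K)) (veh Rm))).
  have bilF := bil_sub (bil_add (bil_add (bil_add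
     (bil_sub (bil_lin (invmx (1%:M + f1 (veh Rm))) l1) (bil_lin (invmx (1%:M + f2 (veh Rm))) l2))
     (bil_scale s (bil_lin (invmx (0 + Rmat (veh Rm))) l3)))
     (bil_scale s (bil_lin (invmx (PT%:M + f4 (veh Rm))) l4)))
     (bil_sum (fun j => bil_scale s (bil_lin (invmx ((PI j)%:M + f5 j (veh Rm))) (l5 j)))))
     (@bil_cst0 R (nx m)).
  rewrite /hessian (hess_D2 D2F); apply/negP => /det0P [v v0 vH].
  have := qf_hess v bilF; rewrite vH mul0mx mxE /= => E0.
  have V0 : Rmat v != 0 by apply: contra v0 => /eqP /(Rmat_inj x0) ->.
  have A1 : \tr (invmx (1%:M + f2 (veh Rm)) *m f2 v *m invmx (1%:M + f2 (veh Rm)) *m f2 v)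
         <= \tr (invmx (1%:M + f1 (veh Rm)) *m f1 v *m invmx (1%:M + f1 (veh Rm)) *m f1 v).
    have pK' : pd (block_mx 1%:M N N^T 1%:M) := hK.
    have sV : sym (Rmat v) := Rmat_sym v.
    have := @keyX R m n1 n2 Rm N H1 H2 (Rmat v) sR pR pK' sV.
    rewrite /f1 /f2 RE !mulmx1 /K /H /Kmat /Hmat. exact.
  have A3 : 0 < \tr (invmx (0 + Rmat (veh Rm)) *m Rmat v *m invmx (0 + Rmat (veh Rm)) *m Rmat v).
    rewrite add0r RE; apply: tr_pd_strict => //; [exact: sym_inv | exact: pd_inv | exact: Rmat_sym].
  have A4 := tr11_ge0 (invmx (PT%:M + f4 (veh Rm))) (f4 v).
  have A5 : \sum_(j < J) s * - \tr (invmx ((PI j)%:M + f5 j (veh Rm)) *m f5 j v *m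
            invmx ((PI j)%:M + f5 j (veh Rm)) *m f5 j v) <= 0.
    apply: sumr_le0 => j _; rewrite mulrN oppr_le0; apply: mulr_ge0; first exact: ltW.
    exact: tr11_ge0.
  have B3 := mulr_gt0 s0 A3; have B4 := mulr_ge0 (ltW s0) A4.
  move: E0 A5; rewrite !mulrN; move: A1 B3 B4.
  set a1 := \tr (invmx (1%:M + f1 _) *m _ *m _ *m _).
  set a2 := \tr (invmx (1%:M + f2 _) *m _ *m _ *m _).
  set S := \sum_(j < J) _.
  set b3 := s * _; set b4 := s * _.
  move=> *; lra.
- pose fy := fun y : 'rV[R]_(n2 * n1) => Kmat0 (Nmat y).
  have ly : lin fy := @lin_K0N R n1 n2.
  set M' := H *m Rm *m H^T.
  have sM' : sym M' := sym_conj H sR.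
  have pM' : psd M' := psd_conj2 H (pd_psd pR).
  have Ky : forall y, Kmat (Nmat y) = 1%:M + fy y by move=> y; rewrite Kmat_split.
  have fy0 : 1%:M + fy (vecN N) = K by rewrite -Ky KE.
  have fa0 : 1%:M + M' + fy (vecN N) = K + M' by rewrite -fy0 addrAC.
  have da : 0 < \det (1%:M + M' + fy (vecN N)).
    by rewrite fa0; apply: det_pd; [exact: sym_add | exact: pd_add_psd].
  have db : 0 < \det (1%:M + fy (vecN N)) by rewrite fy0; exact: det_pd.
  set C := - ln (\det (1%:M + H2^T *m H2 *m Rm)) + s * ln (\det Rm)
      + s * ln (PT - \tr Rm) + \sum_(j < J) s * ln (PI j - \tr ((H3 j)^T *m H3 j *m Rm)).
  pose G := fun y => ((ln (\det (1%:M + M' + fy y)) - ln (\det (1%:M + fy y))) + C)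
                      - s * ln (\det (1%:M + fy y)).
  have D2G := D2_sub (D2_add (D2_sub (D2_lin ly da) (D2_lin ly db)) (D2_cst C (vecN N)))
                     (D2_scale s (D2_lin ly db)).
  have nearE : forall u v, \forall h \near (0:R), \forall k \near (0:R),
      ft_xy H1 H2 H3 PT PI t (veh Rm) (k *: v + (h *: u + vecN N)) =
      G (k *: v + (h *: u + vecN N)).
    move=> u v; apply: filterS2 (near2_pos ly da u v) (near2_pos ly db u v) => h ha hb.
    apply: filterS2 ha hb => k pa pb.
    set y := k *: v + (h *: u + vecN N) in pa pb *.
    set Kp := 1%:M + fy y in pb *.
    have uKp : Kp \in unitmx by rewrite unitmxE unitfE gt_eqF.
    have e : \det (1%:M + invmx Kp *m H *m Rm *m H^T) = \det (1%:M + M' + fy y) / \det Kp.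
      have -> : 1%:M + invmx Kp *m H *m Rm *m H^T = invmx Kp *m (Kp + M').
        by rewrite mulmxDr mulVmx // /M' !mulmxA.
      by rewrite det_mulmx det_inv mulrC /Kp addrAC.
    rewrite /ft_xy /ft /f /= RE Ky -/Kp e ln_div ?posrE // /G /C.
    by rewrite -/Kp -/s; ring.
  have D2F := D2_near nearE D2G.
  have bilF := bil_sub (bil_add (bil_sub (bil_lin (invmx (1%:M + M' + fy (vecN N))) ly)
       (bil_lin (invmx (1%:M + fy (vecN N))) ly)) (@bil_cst0 R (n2 * n1)))
       (bil_scale s (bil_lin (invmx (1%:M + fy (vecN N))) ly)).
  rewrite /hessian (hess_D2 D2F); apply/negP => /det0P [v v0 vH].
  have := qf_hess v bilF; rewrite vH mul0mx mxE /= => E0.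
  have D0 : fy v != 0 by apply: contra v0 => /eqP /K0N_inj ->.
  have sD : sym (fy v) := Kmat0_sym (Nmat v).
  move: E0; rewrite fa0 fy0 => E0.
  have A1 := keyY sK pK sM' pM' sD.
  have A2 := tr_pd_strict (sym_inv sK) (pd_inv sK pK) sD D0.
  have B2 := mulr_gt0 s0 A2.
  move: E0 A1 B2; rewrite !mulrN.
  set a1 := \tr (invmx (K + M') *m _ *m _ *m _).
  set a2 := \tr (invmx K *m _ *m _ *m _).
  set b2 := s * _.
  move=> *; lra.
Qed.
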